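(* Let $q$ be a prime with $q \equiv 1 \pmod 6$ or $q = 3$, and let $s$ be an integer with $\Phi_6(s) \equiv 0 \pmod q$ or $\Phi_3(s) \equiv 0 \pmod q$, where $\Phi_3(x)=x^2+x+1$, $\Phi_4(x)=x^2+1$, $\Phi_6(x)=x^2-x+1$. Define \begin{align*} f_1(x) &= qx^2+(2s+1)x+\Phi_3(s)/q, & f_2(x) &= q^2x^2+(2s-1)qx+\Phi_6(s),\\ f_3(x) &= q^2x^2+(2s+1)qx+\Phi_3(s), & f_4(x) &= qx^2+(2s-1)x+\Phi_6(s)/q. \end{align*} Then for all $x\in\mathbb{Z}$, \[ \Phi_6(\Phi_4(qx+s)) = \begin{cases} q\,f_1(x)f_2(x), & \text{if } q \mid \Phi_3(s),\\ q\,f_3(x)f_4(x), & \text{if } q \mid \Phi_6(s),\end{cases} \] and (in each case in which they have integer coefficients) the polynomials $f_1, f_2, f_3, f_4$ are irreducible over $\mathbb{Z}$.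
   Context: A polynomial in $\mathbb{Z}[x]$ is called irreducible over $\mathbb{Z}$ if it is not a product of two non-constant polynomials with integer coefficients. *)

(* Defs.v *)
From mathcomp Require Import all_boot all_order all_algebra.
Set Implicit Arguments. Unset Strict Implicit. Unset Printing Implicit Defensive.
Import Order.TTheory GRing.Theory Num.Theory.
Local Open Scope ring_scope.

Definition Phi3 (x : int) : int := x ^+ 2 + x + 1.
Definition Phi4 (x : int) : int := x ^+ 2 + 1.
Definition Phi6 (x : int) : int := x ^+ 2 - x + 1.

(* The four quadratics; Phi3 s / q and Phi6 s / q are integer (Euclidean)
   quotients, only used when q divides the numerator. *)
Definition f1 (q s : int) : {poly int} :=
  q *: 'X^2 + (2 * s + 1) *: 'X + polyC (Phi3 s %/ q)%Z.
Definition f2 (q s : int) : {poly int} :=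
  (q ^+ 2) *: 'X^2 + ((2 * s - 1) * q) *: 'X + polyC (Phi6 s).
Definition f3 (q s : int) : {poly int} :=
  (q ^+ 2) *: 'X^2 + ((2 * s + 1) * q) *: 'X + polyC (Phi3 s).
Definition f4 (q s : int) : {poly int} :=
  q *: 'X^2 + (2 * s - 1) *: 'X + polyC (Phi6 s %/ q)%Z.

Definition irreducible_Z (p : {poly int}) : Prop :=
  ~ exists g h : {poly int}, (1 < size g)%N /\ (1 < size h)%N /\ p = g * h.

(* Main.v *)
Require Import Defs.
From mathcomp Require Import all_boot all_order all_algebra.
From mathcomp Require Import ring zify.
Import Order.TTheory GRing.Theory Num.Theory.
Local Open Scope ring_scope.

Lemma quad_irr (a b c : int) : b ^+ 2 - 4 * a * c < 0 ->
  irreducible_Z (a *: 'X^2 + b *: 'X + c%:P).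
Proof.
move=> hd [g [h [hg [hh E]]]].
have g0 : g != 0 by rewrite -size_poly_gt0 (ltn_trans _ hg).
have h0 : h != 0 by rewrite -size_poly_gt0 (ltn_trans _ hh).
have sp : (size (a *: 'X^2 + b *: 'X + c%:P)%R <= 3)%N.
  rewrite (leq_trans (size_polyD _ _)) // geq_max (leq_trans (size_polyC_leq1 _)) // andbT.
  rewrite (leq_trans (size_polyD _ _)) // geq_max.
  rewrite (leq_trans (size_scale_leq _ _)) ?size_polyXn //.
  by rewrite (leq_trans (size_scale_leq _ _)) ?size_polyX.
rewrite E size_mul // -subn1 in sp.
move: hg hh sp; set m := size g; set n := size h => hg hh sp.
have [sg sh] : m = 2%N /\ n = 2%N by lia.
have g2 : g`_2 = 0 by rewrite nth_default // -/m sg.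
have h2 : h`_2 = 0 by rewrite nth_default // -/n sh.
have ca : a = g`_1 * h`_1.
  have := congr1 (fun p : {poly int} => p`_2) E.
  rewrite /= coefM !big_ord_recr big_ord0 /= !coefD !coefZ !coefXn !coefX coefC /=.
  rewrite ?subSS ?subn0 ?subnn g2 h2 => H; rewrite ?mulr1 ?mulr0 ?addr0 ?add0r ?mul0r in H; rewrite H; ring.
have cb : b = g`_0 * h`_1 + g`_1 * h`_0.
  have := congr1 (fun p : {poly int} => p`_1) E.
  rewrite /= coefM !big_ord_recr big_ord0 /= !coefD !coefZ !coefXn !coefX coefC /=.
  rewrite ?subSS ?subn0 ?subnn => H; rewrite ?mulr1 ?mulr0 ?addr0 ?add0r ?mul0r in H; rewrite H; ring.
have cc : c = g`_0 * h`_0.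
  have := congr1 (fun p : {poly int} => p`_0) E.
  rewrite /= coefM !big_ord_recr big_ord0 /= !coefD !coefZ !coefXn !coefX coefC /=.
  rewrite ?subSS ?subn0 ?subnn => H; rewrite ?mulr1 ?mulr0 ?addr0 ?add0r ?mul0r in H; rewrite H; ring.
have : b ^+ 2 - 4 * a * c = (g`_1 * h`_0 - g`_0 * h`_1) ^+ 2.
  rewrite ca cb cc; ring.
by move=> eq; move: hd; rewrite eq ltNge sqr_ge0.
Qed.

Theorem lemma1 (q : nat) (s : int)
  (hq : prime q) (hq6 : (q %% 6 = 1)%N \/ q = 3%N)
  (hs : (q%:Z %| Phi6 s)%Z \/ (q%:Z %| Phi3 s)%Z) :
  ((q%:Z %| Phi3 s)%Z ->
     (forall x : int, Phi6 (Phi4 (q%:Z * x + s)) =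
                      q%:Z * (f1 q s).[x] * (f2 q s).[x])
     /\ irreducible_Z (f1 q s))
  /\ ((q%:Z %| Phi6 s)%Z ->
     (forall x : int, Phi6 (Phi4 (q%:Z * x + s)) =
                      q%:Z * (f3 q s).[x] * (f4 q s).[x])
     /\ irreducible_Z (f4 q s))
  /\ irreducible_Z (f2 q s) /\ irreducible_Z (f3 q s).
Proof.
have qpos : 0 < q%:Z by rewrite ltz_nat prime_gt0.
have q2 : 0 < q%:Z ^+ 2 by rewrite exprn_gt0.
split; [|split; [|split]].
- move=> /divzK hk; split.
    move=> x.
    have -> : q%:Z * (f1 q s).[x] = Phi3 (q%:Z * x + s).
      rewrite /f1 !(hornerD, hornerZ, hornerXn, hornerX, hornerC) mulrDr (mulrC q%:Z (Phi3 s %/ q)%Z) hk /Phi3; ring.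
    rewrite /f2 !(hornerD, hornerZ, hornerXn, hornerX, hornerC) /Phi3 /Phi6 /Phi4; ring.
  apply: quad_irr.
  have -> : (2 * s + 1) ^+ 2 - 4 * q%:Z * (Phi3 s %/ q)%Z = -3.
    by rewrite -mulrA [_ * (_ %/ _)%Z]mulrC hk /Phi3; ring.
  by [].
- move=> /divzK hk; split.
    move=> x; rewrite -mulrA [q%:Z * (_ * _)]mulrC -mulrA.
    have -> : (f4 q s).[x] * q%:Z = Phi6 (q%:Z * x + s).
      rewrite /f4 !(hornerD, hornerZ, hornerXn, hornerX, hornerC) mulrDl hk /Phi6; ring.
    rewrite /f3 !(hornerD, hornerZ, hornerXn, hornerX, hornerC) /Phi3 /Phi6 /Phi4; ring.
  apply: quad_irr.
  have -> : (2 * s - 1) ^+ 2 - 4 * q%:Z * (Phi6 s %/ q)%Z = -3.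
    by rewrite -mulrA [_ * (_ %/ _)%Z]mulrC hk /Phi6; ring.
  by [].
- apply: quad_irr.
  have -> : ((2 * s - 1) * q%:Z) ^+ 2 - 4 * q%:Z ^+ 2 * Phi6 s = - (3 * q%:Z ^+ 2).
    by rewrite /Phi6; ring.
  by rewrite oppr_lt0 mulr_gt0.
- apply: quad_irr.
  have -> : ((2 * s + 1) * q%:Z) ^+ 2 - 4 * q%:Z ^+ 2 * Phi3 s = - (3 * q%:Z ^+ 2).
    by rewrite /Phi3; ring.
  by rewrite oppr_lt0 mulr_gt0.
Qed.
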